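(* For every integer $m\ge2$ and every $a\ge0$, all leading principal minors $R_l=\det\big((R_{ij})_{1\le i,j\le l}\big)$, $l=1,\dots,m$, are positive; hence $R$ is positive definite. Moreover every entry of $R^{-1}$ is strictly positive: $(R^{-1})_{ij}>0$ for all $i,j=1,\dots,m$. In particular $r_i=\sum_{j=1}^m(R^{-1})_{ij}>0$ for each $i$.
   Context: $R$ is the symmetric tridiagonal $m\times m$ matrix with $R_{ii}=2a^2+2i-1$ ($1\le i\le m$), $R_{i,i+1}=R_{i+1,i}=-(a^2+i)$ ($1\le i\le m-1$), and all other entries zero. *)

(* Defs.v *)
(* The statement is purely algebraic, so it is stated over an
   arbitrary real field R (covers the real numbers). *)
From HB Require Import structures.
From mathcomp Require Import all_boot all_order all_algebra.
Set Implicit Arguments. Unset Strict Implicit. Unset Printing Implicit Defensive.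
Import Order.TTheory GRing.Theory Num.Theory.
Local Open Scope ring_scope.

(* Entries of R with 0-based indices i, j (paper index = i+1):
   R_{ii} = 2a^2 + 2(i+1) - 1 = 2a^2 + (2i+1),
   R_{i,i+1} = R_{i+1,i} = -(a^2 + (i+1)). *)
Definition Rentry {F : pzRingType} (a : F) (i j : nat) : F :=
  if i == j then 2 * a ^+ 2 + (2 * i + 1)%N%:R
  else if (j == i.+1) || (i == j.+1) then - (a ^+ 2 + (minn i j).+1%:R)
  else 0.

Definition Rmat {F : pzRingType} (m : nat) (a : F) : 'M[F]_m :=
  \matrix_(i < m, j < m) Rentry a i j.

Definition lead_submx {F : pzRingType} (m : nat) (A : 'M[F]_m) (l : 'I_m)
  : 'M[F]_l.+1 :=
  mxsub (widen_ord (ltn_ord l)) (widen_ord (ltn_ord l)) A.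

Definition posdef {F : numDomainType} (m : nat) (A : 'M[F]_m) : Prop :=
  A^T = A /\ forall x : 'cV[F]_m, x != 0 -> 0 < (x^T *m A *m x) 0 0.

(* Main.v *)
Require Import Defs.
From HB Require Import structures.
From mathcomp Require Import all_boot all_order all_algebra.
From mathcomp Require Import ring lra zify.
Import Order.TTheory GRing.Theory Num.Theory.
Local Open Scope ring_scope.

Section S.
Variable F : realFieldType.
Variable a : F.

Definition Mk k : 'M[F]_k := \matrix_(i < k, j < k) Rentry a i j.
Definition Dk k := \det (Mk k).

Lemma sign_even k : (-1) ^+ (k + k)%N = 1 :> F.
Proof. by rewrite -signr_odd oddD addbb. Qed.

Lemma RE_d i : Rentry a i i = 2 * a ^+ 2 + (2 * i + 1)%N%:R.
Proof. by rewrite /Rentry eqxx. Qed.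
Lemma RE_up i : Rentry a i i.+1 = - (a ^+ 2 + i.+1%:R).
Proof.
rewrite /Rentry (_ : (i == i.+1) = false); last by apply/eqP; lia.
by rewrite eqxx /= (minn_idPl (leqnSn i)).
Qed.
Lemma RE_lo i : Rentry a i.+1 i = - (a ^+ 2 + i.+1%:R).
Proof.
rewrite /Rentry (_ : (i.+1 == i) = false); last by apply/eqP; lia.
by rewrite eqxx orbT (minn_idPr (leqnSn i)).
Qed.
Lemma RE_0 i j : (i.+1 < j)%N || (j.+1 < i)%N -> Rentry a i j = 0.
Proof.
move=> h; rewrite /Rentry (_ : (i == j) = false); last by apply/eqP; lia.
by rewrite (_ : (j == i.+1) || (i == j.+1) = false) //; apply/negbTE; apply/norP; split; apply/eqP; lia.
Qed.

Lemma RE_sym i j : Rentry a i j = Rentry a j i.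
Proof.
rewrite /Rentry; case: (eqVneq i j) => [->|hne] //.
by rewrite minnC orbC.
Qed.

Lemma rc_max k : row' ord_max (col' ord_max (Mk k.+1)) = Mk k.
Proof. by apply/matrixP => i j; rewrite !mxE !lift_max. Qed.

Lemma det_N k : \det (row' ord_max
           (col' (widen_ord (leqnSn k.+1) ord_max) (Mk k.+2)))
   = - (a ^+ 2 + k.+1%:R) * Dk k.
Proof.
rewrite (expand_det_col _ ord_max) big_ord_recr /=.
rewrite big1 ?add0r; last first.
  move=> i _; rewrite !mxE /= RE_0 ?mul0r //.
  have hi := ltn_ord i. rewrite /bump.
  rewrite leqnn (_ : (k.+1 <= i)%N = false); last by lia.
  lia.
rewrite /cofactor !mxE /= /bump leqnn ltnn add0n.
rewrite (_ : (true + k)%N = k.+1) // RE_up sign_even mul1r; congr (_ * _).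
rewrite /Dk; congr (\det _); apply/matrixP => i j; rewrite !mxE /= /bump.
have hj := ltn_ord j; have hi := ltn_ord i.
have e1 : (k <= i)%N = false by lia.
have e2 : (k <= j)%N = false by lia.
rewrite e1 !add0n (_ : (k < i)%N = false) ?e2 //; lia.
Qed.

Lemma Dk_rec k : Dk k.+2 = (2 * a ^+ 2 + (2 * k.+1 + 1)%N%:R) * Dk k.+1
   - (a ^+ 2 + k.+1%:R) ^+ 2 * Dk k.
Proof.
rewrite /Dk (expand_det_row _ ord_max) big_ord_recr big_ord_recr /=.
rewrite big1 ?add0r; last first.
  move=> j _; rewrite !mxE /= RE_0 ?mul0r //.
  have hj := ltn_ord j; lia.
rewrite !mxE /= RE_d RE_lo /cofactor /= -/(Mk k.+1) rc_max det_N.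
rewrite (sign_even k.+1) [(k.+1 + k)%N]addSn (exprS (-1)) (sign_even k) /Dk; ring.
Qed.

Lemma Dk0 : Dk 0 = 1. Proof. exact: det_mx00. Qed.
Lemma Dk1 : Dk 1 = 2 * a ^+ 2 + 1.
Proof. by rewrite /Dk det_mx11 mxE RE_d. Qed.

Lemma Dk_bound k : (a ^+ 2 + k.+1%:R) * Dk k <= Dk k.+1 /\ 0 < Dk k.
Proof.
have b0 : 0 <= a ^+ 2 by rewrite sqr_ge0.
elim: k => [|k [IH1 IH2]].
  rewrite Dk0 Dk1; split; last by lra. rewrite mulr1; lra.
have w0 : 0 < a ^+ 2 + k.+1%:R by rewrite ltr_pwDr ?ltr0n.
have p1 : 0 < Dk k.+1 by apply: lt_le_trans IH1; rewrite mulr_gt0.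
split => //.
rewrite Dk_rec.
have IH1' : 0 <= Dk k.+1 - (a ^+ 2 + k.+1%:R) * Dk k by rewrite subr_ge0.
have h := mulr_ge0 (ltW w0) IH1'.
rewrite -[k.+2]addn2 -[k.+1]addn1 !natrD ?natrM in h w0 *.
nra.
Qed.

Definition qf n (x : nat -> F) :=
  \sum_(i < n) \sum_(j < n) x i * Rentry a i j * x j.

Lemma col_last k (x : nat -> F) :
  \sum_(i < k.+1) x i * Rentry a i k.+1 * x k.+1 = - (a ^+ 2 + k.+1%:R) * x k * x k.+1.
Proof.
rewrite big_ord_recr /= big1 ?add0r; first by rewrite RE_up; ring.
move=> i _; have := ltn_ord i => hi; rewrite RE_0 ?mulr0 ?mul0r //; lia.
Qed.

Lemma row_last k (x : nat -> F) :
  \sum_(j < k.+1) x k.+1 * Rentry a k.+1 j * x j = - (a ^+ 2 + k.+1%:R) * x k * x k.+1.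
Proof.
rewrite big_ord_recr /= big1 ?add0r; first by rewrite RE_lo; ring.
move=> i _; have := ltn_ord i => hi; rewrite RE_0 ?mulr0 ?mul0r //; lia.
Qed.

Lemma qf_id k (x : nat -> F) : qf k.+1 x = a ^+ 2 * x 0%N ^+ 2
  + (a ^+ 2 + k.+1%:R) * x k ^+ 2
  + \sum_(i < k) (a ^+ 2 + i.+1%:R) * (x i - x i.+1) ^+ 2.
Proof.
elim: k => [|k IH].
  rewrite /qf !big_ord1 big_ord0 /= RE_d; ring.
rewrite /qf big_ord_recr /=.
rewrite (eq_bigr (fun i : 'I_k.+1 => \sum_(j < k.+1) x i * Rentry a i j * x j
     + x i * Rentry a i k.+1 * x k.+1)); last by move=> i _; rewrite big_ord_recr.
rewrite big_split /= -/(qf k.+1 x) IH col_last big_ord_recr /= row_last RE_d.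
rewrite [in RHS]big_ord_recr /=.
rewrite -[k.+2]addn2 -[k.+1]addn1 !natrD ?natrM.
ring.
Qed.

Lemma qf_pos k (x : nat -> F) i0 : (i0 < k.+1)%N -> x i0 != 0 -> 0 < qf k.+1 x.
Proof.
move=> hi0 hx; rewrite qf_id.
have b0 : 0 <= a ^+ 2 by rewrite sqr_ge0.
have w0 : forall n, 0 < a ^+ 2 + n.+1%:R by move=> n; rewrite ltr_pwDr ?ltr0n.
have T1 : 0 <= a ^+ 2 * x 0%N ^+ 2 by rewrite mulr_ge0 ?sqr_ge0.
have T2 : 0 <= (a ^+ 2 + k.+1%:R) * x k ^+ 2 by rewrite mulr_ge0 ?sqr_ge0 ?ltW.
have T3 : 0 <= \sum_(i < k) (a ^+ 2 + i.+1%:R) * (x i - x i.+1) ^+ 2.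
  by apply: sumr_ge0 => i _; rewrite mulr_ge0 ?sqr_ge0 ?ltW.
rewrite lt_def; apply/andP; split; last by rewrite !addr_ge0.
apply/negP => /eqP hq.
have e2 : (a ^+ 2 + k.+1%:R) * x k ^+ 2 = 0 by lra.
have e3 : \sum_(i < k) (a ^+ 2 + i.+1%:R) * (x i - x i.+1) ^+ 2 = 0 by lra.
have xk : x k = 0.
  by move/eqP: e2; rewrite mulf_eq0 sqrf_eq0 (gt_eqF (w0 _)) /= => /eqP.
have hd : forall i, (i < k)%N -> x i = x i.+1.
  move=> i hi.
  have /eqP := (@psumr_eq0P _ _ _ _ (fun (j : 'I_k) _ => mulr_ge0 (ltW (w0 j)) (sqr_ge0 (x j - x j.+1))) e3 (Ordinal hi) isT).
  by rewrite /= mulf_eq0 sqrf_eq0 (gt_eqF (w0 _)) subr_eq0 /= => /eqP.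
have hall : forall t, (t <= k)%N -> x (k - t)%N = 0.
  elim=> [|t IH] ht; first by rewrite subn0.
  rewrite hd; last by lia.
  by rewrite (_ : (k - t.+1).+1 = k - t)%N ?IH //; lia.
move: hx; rewrite (_ : i0 = k - (k - i0))%N; last by lia.
by rewrite hall ?eqxx //; lia.
Qed.

Lemma quad_mx n (x : 'cV[F]_n) (A : 'M[F]_n) :
  (x^T *m A *m x) 0 0 = \sum_(i < n) \sum_(j < n) x i 0 * A i j * x j 0.
Proof.
rewrite mxE exchange_big /=; apply: eq_bigr => j _.
rewrite mxE mulr_suml; apply: eq_bigr => i _; by rewrite !mxE.
Qed.

Lemma posdef_Mk k : posdef (Mk k.+1).
Proof.
split.
  by apply/matrixP => i j; rewrite !mxE RE_sym.
move=> x hx; rewrite quad_mx.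
have [i0 hi0] : exists i0 : 'I_k.+1, x i0 0 != 0.
  apply/existsP; move: hx; apply: contraR; rewrite negb_exists => /forallP h.
  by apply/eqP/matrixP => i j; rewrite !mxE ord1; have := h i; rewrite negbK => /eqP.
have := @qf_pos k (fun i => x (inord i) 0) i0 (ltn_ord i0); rewrite inord_val => /(_ hi0).
rewrite /qf; congr (_ < _); apply: eq_bigr => i _; apply: eq_bigr => j _.
by rewrite !inord_val mxE.
Qed.

Lemma RE_np i j : i != j -> Rentry a i j <= 0.
Proof.
move=> hne; rewrite /Rentry (negbTE hne).
have b0 : 0 <= a ^+ 2 by rewrite sqr_ge0.
case: ifP => _ //; rewrite oppr_le0 addr_ge0 //.
Qed.

Lemma nonneg_sol n (y : nat -> F) j :
  (forall i, (i < n.+1)%N -> \sum_(l < n.+1) Rentry a i l * y l = (i == j)%:R) ->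
  forall i, (i < n.+1)%N -> 0 <= y i.
Proof.
move=> hrow.
pose ng l := if y l < 0 then - y l else 0.
pose p l := if y l < 0 then 0 else y l.
have hyl : forall l, y l = p l - ng l.
  by move=> l; rewrite /p /ng; case: ifP => _; rewrite ?subr0 ?sub0r ?opprK.
have ng0 : forall l, 0 <= ng l.
  by move=> l; rewrite /ng; case: ifP => h //; rewrite oppr_ge0 ltW.
have p0 : forall l, 0 <= p l.
  by move=> l; rewrite /p; case: ifP => h //; rewrite leNgt h.
have np0 : forall l, ng l * p l = 0.
  by move=> l; rewrite /p /ng; case: ifP => _; rewrite ?mulr0 ?mul0r.
have key : qf n.+1 ng =
   \sum_(i < n.+1) \sum_(l < n.+1) ng i * Rentry a i l * p l
   - \sum_(i < n.+1) ng i * (nat_of_ord i == j)%:R.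
  rewrite /qf -sumrB; apply: eq_bigr => i _.
  rewrite -hrow // mulr_sumr -sumrB; apply: eq_bigr => l _.
  rewrite hyl; ring.
have hle : qf n.+1 ng <= 0.
  rewrite key subr_le0.
  apply: le_trans (_ : 0 <= _); last by apply: sumr_ge0 => i _; rewrite mulr_ge0 ?ler0n.
  apply: sumr_le0 => i _; apply: sumr_le0 => l _.
  case: (eqVneq (nat_of_ord i) (nat_of_ord l)) => [->|hne].
    by rewrite mulrAC np0 mul0r.
  by apply: mulr_le0_ge0 => //; apply: mulr_ge0_le0 => //; apply: RE_np.
move=> i hi; rewrite leNgt; apply/negP => hy.
have : ng i != 0 by rewrite /ng hy oppr_eq0 lt_eqF.
move/(@qf_pos n ng i hi); rewrite ltNge hle //.
Qed.

Lemma zero_prop n (y : nat -> F) j :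
  (forall i, (i < n.+1)%N -> \sum_(l < n.+1) Rentry a i l * y l = (i == j)%:R) ->
  (forall i, (i < n.+1)%N -> 0 <= y i) ->
  forall i, (i < n.+1)%N -> y i = 0 ->
  [/\ i != j, ((i.+1 < n.+1)%N -> y i.+1 = 0) & ((0 < i)%N -> y i.-1 = 0)].
Proof.
move=> hrow hnn i hi hyi.
have w0 : forall n, 0 < a ^+ 2 + n.+1%:R by move=> n'; rewrite ltr_pwDr ?ltr0n ?sqr_ge0.
have f0 : forall l : 'I_n.+1, true -> 0 <= - (Rentry a i l * y l).
  move=> l _; rewrite oppr_ge0.
  case: (eqVneq i (nat_of_ord l)) => [<-|hne]; first by rewrite hyi mulr0.
  by apply: mulr_le0_ge0; [apply: RE_np | apply: hnn].
have hs : \sum_(l < n.+1) - (Rentry a i l * y l) = - (i == j)%:R.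
  by rewrite sumrN hrow.
have hij : i != j.
  have hge : 0 <= \sum_(l < n.+1) - (Rentry a i l * y l) by apply: sumr_ge0.
  apply/negP => /eqP hij; move: hge; rewrite hs hij eqxx oppr_ge0 ler10 //.
move: hs; rewrite (negbTE hij) oppr0 => hs.
have hz := psumr_eq0P f0 hs.
split => //.
  move=> hi1; have := hz (Ordinal hi1) isT; rewrite /= RE_up.
  move/eqP; rewrite oppr_eq0 mulf_eq0 oppr_eq0 (gt_eqF (w0 _)) /= => /eqP //.
move=> hi0.
have hi1 : (i.-1 < n.+1)%N by lia.
have := hz (Ordinal hi1) isT; rewrite /=.
rewrite -{1}(prednK hi0) RE_lo.
move/eqP; rewrite oppr_eq0 mulf_eq0 oppr_eq0 (gt_eqF (w0 _)) /= => /eqP //.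
Qed.

Lemma pos_sol n (y : nat -> F) j :
  (forall i, (i < n.+1)%N -> \sum_(l < n.+1) Rentry a i l * y l = (i == j)%:R) ->
  (j < n.+1)%N -> forall i, (i < n.+1)%N -> 0 < y i.
Proof.
move=> hrow hj k hk.
have hnn := @nonneg_sol n y j hrow.
have zp := @zero_prop n y j hrow hnn.
rewrite lt_def hnn // andbT; apply/negP => /eqP hyk.
have up : forall t, (k + t < n.+1)%N -> y (k + t)%N = 0.
  elim=> [|t IH] ht; first by rewrite addn0.
  have [_ h _] := zp (k + t)%N (ltac:(lia)) (IH (ltac:(lia))).
  by rewrite addnS h //; lia.
have dn : forall t, (t <= k)%N -> y (k - t)%N = 0.
  elim=> [|t IH] ht; first by rewrite subn0.
  have [_ _ h] := zp (k - t)%N (ltac:(lia)) (IH (ltac:(lia))).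
  by rewrite (_ : (k - t.+1 = (k - t).-1)%N) ?h //; lia.
have yj : y j = 0.
  case: (leqP k j) => hkj.
    by rewrite -(subnKC hkj) up // subnKC.
  by rewrite (_ : j = k - (k - j))%N ?dn //; lia.
have [] := zp j hj yj.
by rewrite eqxx.
Qed.
End S.

Theorem mainTheorem7 (F : realFieldType) (m : nat) (a : F) :
  (2 <= m)%N -> 0 <= a ->
  [/\ (forall l : 'I_m, 0 < \det (lead_submx (Rmat m a) l)),
      posdef (Rmat m a),
      Rmat m a \in unitmx,
      (forall i j : 'I_m, 0 < invmx (Rmat m a) i j)
    & (forall i : 'I_m, 0 < \sum_(j < m) invmx (Rmat m a) i j)].
Proof.
case: m => [//|n] hm _.
have hR : Rmat n.+1 a = Mk F a n.+1 by [].
have hdet : 0 < \det (Rmat n.+1 a) by rewrite hR; case: (Dk_bound F a n.+1).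
have hU : Rmat n.+1 a \in unitmx by rewrite unitmxE unitfE gt_eqF.
have hinv : forall i j : 'I_n.+1, 0 < invmx (Rmat n.+1 a) i j.
  move=> i j.
  pose y l := invmx (Rmat n.+1 a) (inord l) j.
  have hrow : forall i0, (i0 < n.+1)%N ->
      \sum_(l < n.+1) Rentry a i0 l * y l = (i0 == j)%:R.
    move=> i0 hi0.
    have := congr1 (fun M : 'M_n.+1 => M (inord i0) j) (mulmxV hU).
    have e : (inord i0 == j) = (i0 == nat_of_ord j).
      by rewrite -val_eqE /= inordK.
    rewrite !mxE /= e => <-.
    by apply: eq_bigr => l _; rewrite !mxE inordK // /y inord_val.
  have := @pos_sol F a n y j hrow (ltn_ord j) i (ltn_ord i).
  by rewrite /y inord_val.
split => //.
- move=> l; rewrite (_ : lead_submx _ _ = Mk F a l.+1); first by case: (Dk_bound F a l.+1).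
  by apply/matrixP => i j; rewrite !mxE.
- exact: posdef_Mk.
- move=> i; rewrite big_ord_recl.
  have h1 := hinv i ord0.
  have h2 : 0 <= \sum_(k < n) invmx (Rmat n.+1 a) i (lift ord0 k).
    by apply: sumr_ge0 => k _; apply: ltW.
  lra.
Qed.
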